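(* Let $n,d,D$ be positive integers with $D\ge d$, let $\varepsilon>0$, and let $\psi,\phi:\mathbb{R}^d\to\mathbb{R}^D$ be fixed maps. Let $K$ be an $n\times d$ matrix with rows $K_1,\dots,K_n$. Then there is a subset $U\subseteq[n]$, determined by $K$ (and $\phi,\varepsilon$) alone, with $|U|\le D/\varepsilon$, such that for every $n\times d$ matrix $Q$ with rows $Q_1,\dots,Q_n$ and every $i\in[n]$ with $\sum_{\ell=1}^n\langle\psi(Q_i),\phi(K_\ell)\rangle^2>0$, we have $\{j\in[n]: A_{ij}\ge\varepsilon\}\subseteq U$, where $A_{ij}=\frac{\langle\psi(Q_i),\phi(K_j)\rangle^2}{\sum_{\ell=1}^n\langle\psi(Q_i),\phi(K_\ell)\rangle^2}$.
   Context: $[n]=\{1,\dots,n\}$; $\langle\cdot,\cdot\rangle$ is the standard inner product on $\mathbb{R}^D$. *)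

(* Defs.v *)
From mathcomp Require Import all_boot all_order all_algebra.
From mathcomp Require Import reals.
Set Implicit Arguments. Unset Strict Implicit. Unset Printing Implicit Defensive.
Import Order.TTheory GRing.Theory Num.Theory.
Local Open Scope ring_scope.

Definition inner (R : realType) (D : nat) (x y : 'rV[R]_D) : R :=
  \sum_(k < D) x 0 k * y 0 k.

Definition attn (R : realType) (n d D : nat)
  (psi phi : 'rV[R]_d -> 'rV[R]_D) (Q K : 'M[R]_(n, d)) (i j : 'I_n) : R :=
  (inner (psi (row i Q)) (phi (row j K))) ^+ 2 /
  \sum_(l < n) (inner (psi (row i Q)) (phi (row l K))) ^+ 2.

(* Main.v *)
Require Import Defs.
From mathcomp Require Import all_boot all_order all_algebra.
From mathcomp Require Import reals.
From mathcomp Require Import ring lra.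
Import Order.TTheory GRing.Theory Num.Theory.
Local Open Scope ring_scope.

Section Lev.
Variables (R : realFieldType) (n : nat).
Implicit Types (u v w c x y : 'rV[R]_n).

Definition dot u v := \sum_(k < n) u 0 k * v 0 k.

Lemma dotC u v : dot u v = dot v u.
Proof. by apply: eq_bigr => k _; rewrite mulrC. Qed.

Lemma dotDl u v w : dot (u + v) w = dot u w + dot v w.
Proof. by rewrite /dot -big_split; apply: eq_bigr => k _; rewrite !mxE mulrDl. Qed.

Lemma dotZl a u w : dot (a *: u) w = a * dot u w.
Proof. by rewrite /dot mulr_sumr; apply: eq_bigr => k _; rewrite !mxE mulrA. Qed.

Lemma dotZr a u w : dot w (a *: u) = a * dot w u.
Proof. by rewrite dotC dotZl dotC. Qed.

Lemma dotDr u v w : dot w (u + v) = dot w u + dot w v.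
Proof. by rewrite dotC dotDl !(dotC w). Qed.

Lemma dot0l w : dot 0 w = 0.
Proof. by rewrite /dot big1 // => k _; rewrite mxE mul0r. Qed.

Lemma dot_ge0 u : 0 <= dot u u.
Proof. by apply: sumr_ge0 => k _; rewrite -expr2 sqr_ge0. Qed.

Lemma dot_coord u j : u 0 j ^+ 2 <= dot u u.
Proof.
rewrite /dot (bigD1 j) //= expr2 lerDl. apply: sumr_ge0 => k _; by rewrite -expr2 sqr_ge0.
Qed.

Lemma dot_eq0 u : dot u u = 0 -> u = 0.
Proof.
move=> h; apply/rowP => k; rewrite !mxE.
have := dot_coord u k; rewrite h => hk.
have : u 0 k ^+ 2 = 0 by apply/eqP; rewrite eq_le hk sqr_ge0.
by move/eqP; rewrite sqrf_eq0 => /eqP.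
Qed.

Fixpoint inSpan (cs : seq 'rV[R]_n) w : Prop :=
  match cs with
  | [::] => w = 0
  | c :: cs => exists a : R, inSpan cs (w - a *: c)
  end.

Definition proj c x := x - (dot x c / dot c c) *: c.

Lemma proj_orth c x : dot (proj c x) c = 0.
Proof.
rewrite /proj dotDl -scaleNr dotZl.
have [h0|h0] := eqVneq (dot c c) 0.
  by rewrite h0 mulr0 addr0 (dot_eq0 _ h0) /dot big1 // => k _; rewrite mxE mulr0.
by rewrite mulNr divfK // subrr.
Qed.

Lemma span_proj c cs x : inSpan cs x ->
  exists b, inSpan (map (proj c) cs) (x - b *: c).
Proof.
elim: cs x => [|d cs IH] x /=.
  by move=> ->; exists 0; rewrite scale0r subrr.
move=> [a /IH [b hb]].
exists (b + a * (dot d c / dot c c)); exists a.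
suff -> : x - (b + a * (dot d c / dot c c)) *: c - a *: proj c d
        = x - a *: d - b *: c by [].
apply/rowP => k; rewrite /proj !mxE; move: (x 0 k) (c 0 k) (d 0 k) (dot d c / dot c c) => X C D G; ring.
Qed.

Lemma span_orth c cs x : (forall y, y \in cs -> dot y c = 0) ->
  inSpan cs x -> dot x c = 0.
Proof.
elim: cs x => [|d cs IH] x /= hy.
  by move=> ->; rewrite dot0l.
move=> [a hx].
have hy2 : forall y, y \in cs -> dot y c = 0 by move=> y hy'; apply: hy; rewrite inE hy' orbT.
have := IH _ hy2 hx.
rewrite dotDl -scaleNr dotZl (hy d (mem_head _ _)) mulr0 addr0 //.
Qed.

Lemma twoq (q A B : R) : q^+2 <= A*B -> 0 <= A -> 0 <= B -> 2*q <= A + B.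
Proof. move=> h hA hB.
have h2 : (2*q)^+2 <= (A+B)^+2 by have := sqr_ge0 (A - B); nra.
rewrite leNgt; apply/negP => hlt. nra.
Qed.

Lemma key (p al cj T S X N : R) : p ^+ 2 <= T * S -> cj ^+ 2 = X * N ->
  0 <= T -> 0 <= S -> 0 <= X -> 0 <= N ->
  (p + al * cj) ^+ 2 <= (T + X) * (S + al ^+ 2 * N).
Proof.
move=> hp hc hT hS hX hN.
have h1 : (p * (al * cj)) ^+ 2 <= (T * (al ^+ 2 * N)) * (X * S).
  rewrite !exprMn hc.
  have : p ^+ 2 * (al ^+ 2 * (X * N)) <= T * S * (al ^+ 2 * (X * N)).
    by apply: ler_wpM2r => //; apply: mulr_ge0; [exact: sqr_ge0 | exact: mulr_ge0].
  by move=> h; apply: le_trans h _; rewrite le_eqVlt; apply/orP; left; apply/eqP; ring.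
have h2 := twoq _ _ _ h1 (mulr_ge0 hT (mulr_ge0 (sqr_ge0 al) hN)) (mulr_ge0 hX hS).
have e : (p + al * cj) ^+ 2 = p ^+ 2 + 2 * (p * (al * cj)) + al ^+ 2 * (X * N)
  by rewrite -hc; ring.
rewrite e; nra.
Qed.

Lemma lev_aux m : forall cs : seq 'rV[R]_n, size cs = m -> exists t : 'I_n -> R,
  [/\ forall j, 0 <= t j, \sum_j t j <= m%:R &
      forall w, inSpan cs w -> forall j, w 0 j ^+ 2 <= t j * dot w w].
Proof.
elim: m => [|m IH] [|c cs] //= hs.
  exists (fun _ => 0); split => //; first by rewrite big1.
  by move=> w -> j; rewrite mxE expr0n /= mul0r.
case: hs => hs.
have [t [ht0 hts htw]] := IH (map (proj c) cs) (etrans (size_map _ _) hs).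
pose N := dot c c.
exists (fun j => t j + c 0 j ^+ 2 / N); split.
- by move=> j; apply: addr_ge0 => //; apply: divr_ge0; [exact: sqr_ge0 | exact: dot_ge0].
- rewrite big_split /= -mulr_suml -natr1; apply: lerD => //.
  have [h0|h0] := eqVneq N 0; first by rewrite h0 invr0 mulr0.
  by rewrite (_ : \sum_i c 0 i ^+ 2 = N) ?divff // /N /dot; apply: eq_bigr => i _; rewrite expr2.
move=> w [a /(span_proj c) [b hb]] j.
set w' := w - a *: c - b *: c in hb.
have ew : w = w' + (a + b) *: c by apply/rowP => k; rewrite !mxE; ring.
clearbody w'.
have orth : dot w' c = 0.
  apply: (@span_orth c _ _ _ hb) => y /mapP [z _ ->]; exact: proj_orth.
have hww : dot w w = dot w' w' + (a + b) ^+ 2 * N.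
  rewrite ew dotDl !dotDr !dotZl !dotZr orth (dotC c w') orth /N; ring.
have hwj : w 0 j = w' 0 j + (a + b) * c 0 j by rewrite ew !mxE.
rewrite hww hwj; apply: key.
- exact: htw.
- have [h0|h0] := eqVneq N 0.
    have := dot_coord c j; rewrite -/N h0 => hc.
    by rewrite mulr0; apply/eqP; rewrite eq_le hc sqr_ge0.
  by rewrite divfK.
- exact: ht0.
- exact: dot_ge0.
- by apply: divr_ge0; [exact: sqr_ge0 | exact: dot_ge0].
- exact: dot_ge0.
Qed.

Lemma span_sum (I : eqType) (s : seq I) (f : I -> 'rV[R]_n) (a : I -> R) :
  inSpan (map f s) (\sum_(x <- s) a x *: f x).
Proof.
elim: s => [|x s IH] /=; first by rewrite big_nil.
by exists (a x); rewrite big_cons addrC addKr.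
Qed.
End Lev.

Theorem theorem2 (R : realType) (n d D : nat) (hn : (0 < n)%N) (hd : (0 < d)%N)
  (hDd : (d <= D)%N) (eps : R) (heps : 0 < eps)
  (phi : 'rV[R]_d -> 'rV[R]_D) (K : 'M[R]_(n, d)) :
  exists U : {set 'I_n},
    (#|U|%:R <= D%:R / eps) /\
    forall (psi : 'rV[R]_d -> 'rV[R]_D) (Q : 'M[R]_(n, d)) (i : 'I_n),
      0 < \sum_(l < n) (inner (psi (row i Q)) (phi (row l K))) ^+ 2 ->
      forall j : 'I_n, eps <= attn psi phi Q K i j -> j \in U.
Proof.
pose f (k : 'I_D) : 'rV[R]_n := \row_l phi (row l K) 0 k.
have [t [ht0 hts htw]] := @lev_aux R n _ (map f (enum 'I_D)) (erefl _).
rewrite size_map size_enum_ord in hts.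
pose U := [set j | eps <= t j].
exists U; split.
  rewrite ler_pdivlMr //.
  apply: le_trans hts.
  have -> : #|U|%:R * eps = \sum_(j in U) eps by rewrite sumr_const mulr_natl.
  apply: (@le_trans _ _ (\sum_(j in U) t j)).
    by apply: ler_sum => j; rewrite inE.
  rewrite [leRHS](bigID (fun j => j \in U)) /= lerDl.
  by apply: sumr_ge0 => j _.
move=> psi Q i hS j hA.
rewrite inE leNgt; apply/negP => hlt.
set v := psi (row i Q) in hS hA.
pose w : 'rV[R]_n := \row_l inner v (phi (row l K)).
have wS : inSpan R n (map f (enum 'I_D)) w.
  have -> : w = \sum_(k <- enum 'I_D) v 0 k *: f k.
    apply/rowP => l; rewrite !mxE summxE big_enum /= /inner.
    apply: eq_bigr => k _; rewrite !mxE //.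
  exact: span_sum.
have dw : dot R n w w = \sum_(l < n) (inner v (phi (row l K))) ^+ 2.
  by rewrite /dot; apply: eq_bigr => l _; rewrite !mxE expr2.
have := htw w wS j; rewrite dw mxE.
rewrite /attn -/v ler_pdivlMr // in hA.
move=> h; have := le_trans hA h.
by rewrite ler_pM2r // leNgt hlt.
Qed.
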